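(* $\mathtt{normal}$-$\mathtt{pred}$-$\mathtt{ESO}$-$\mathtt{HORN}\subseteq\mathtt{RealTime_{OIA}}$: for every normalized predecessor Horn formula $\Phi$ there is a one-way iterative array $\mathcal A$ accepting in real time exactly the words $w\in\Sigma^+$ with $\langle w\rangle\models\Phi$.
   Context: Fix a finite alphabet $\Sigma$. A nonempty word $w=w_1\cdots w_n$ is represented by the structure $\langle w\rangle=([1,n];(Q_s)_{s\in\Sigma},\mathtt{min},\mathtt{max},\mathtt{suc},\mathtt{pred})$ with $Q_s(i)\iff w_i=s$, $\mathtt{min}(i)\iff i=1$, $\mathtt{max}(i)\iff i=n$, $\mathtt{suc}(i)=\min(i+1,n)$, $\mathtt{pred}(i)=\max(i-1,1)$; $x-1=\mathtt{pred}(x)$. A normalized predecessor Horn formula is $\Phi=\exists\mathbf{R}\forall x\forall y\,\psi(x,y)$, with $\mathbf{R}$ a finite set of binary relation symbols and $\psi$ a conjunction of clauses each of one of the forms: input clauses $\mathtt{min}(x)\wedge\mathtt{min}(y)\wedge Q_s(y)\to R(x,y)$ or $\mathtt{min}(x)\wedge\neg\mathtt{min}(y)\wedge Q_s(y)\to R(x,y)$ ($s\in\Sigma$, $R\in\mathbf{R}$); the contradiction clause $\mathtt{max}(x)\wedge\mathtt{max}(y)\wedge R_\bot(x,y)\to\bot$ for a fixed $R_\bot\in\mathbf{R}$; computation clauses $\delta_1\wedge\cdots\wedge\delta_r\to R(x,y)$ with $R\in\mathbf{R}$ and each $\delta_i$ a conjunction $S(x-1,y)\wedge\neg\mathtt{min}(x)$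 or $S(x,y-1)\wedge\neg\mathtt{min}(y)$, $S\in\mathbf{R}$. $\mathtt{normal}$-$\mathtt{pred}$-$\mathtt{ESO}$-$\mathtt{HORN}$ is the class of languages $\{w\in\Sigma^+:\langle w\rangle\models\Phi\}$ for such $\Phi$. A one-way iterative array (OIA) is a cellular automaton with finite state set $Q$, accepting states $Q_{accept}\subseteq Q$, neighborhood $\{-1,0\}$, transition function $\delta:Q^2\to Q$, and an input transition function $\delta_{input}$ for the first cell. On input $w=w_1\cdots w_n$ it uses cells $1,\dots,n$; cells outside are permanently in a state $\sharp$, cells not yet reached by information are in a quiescent state $\lambda$. Input is sequential: the letter $w_i$ is given to cell $1$ at time $i$ (the new state of cell 1 at time $i\le n$ is computed by $\delta_{input}$ from $w_i$ and the previous states); other cells are updated by $\langle c,t\rangle=\delta(\langle c-1,t-1\rangle,\langle c,t-1\rangle)$. The output cell is cell $n$, and $w$ is accepted in real time iff $\langle n,2n-1\rangle\in Q_{accept}$ (the first time at which cell $n$ has received information from all letters). $\mathtt{RealTime_{OIA}}$ is the class of languages so accepted. *)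

(* Defs.v *)
From mathcomp Require Import all_boot.
From Stdlib Require List.
Set Implicit Arguments. Unset Strict Implicit. Unset Printing Implicit Defensive.

(* letter w_i (1-indexed); Q_s(i) <-> wletter w i = Some s *)
Definition wletter (Sigma : eqType) (w : seq Sigma) (i : nat) : option Sigma :=
  onth w i.-1.
Definition Qs (Sigma : eqType) (w : seq Sigma) (s : Sigma) (i : nat) : Prop :=
  wletter w i = Some s.
Definition is_min (i : nat) : Prop := i = 1.
Definition is_max (n i : nat) : Prop := i = n.
(* pred(i) = max(i-1,1) ;  x - 1 := pred x *)
Definition wpred (i : nat) : nat := maxn (i - 1) 1.

(* atoms of computation clauses:
   ALeft S  : S(x-1,y) /\ ~min(x)
   ADown S  : S(x,y-1) /\ ~min(y) *)
Inductive atom (Rl : Type) := ALeft of Rl | ADown of Rl.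

Inductive clause (Sigma Rl : Type) :=
  | InMin of Sigma & Rl
  | InNotMin of Sigma & Rl
  | Contra
  | Comp of atom Rl & seq (atom Rl) & Rl.
      (* delta_1 /\ ... /\ delta_r -> R(x,y), r >= 1 (first atom, rest, head) *)

Record formula (Sigma : Type) := Formula {
  frel : finType;
  fRbot : frel;
  fclauses : seq (clause Sigma frel) }.

Section Sat.
Variables (Sigma : eqType) (w : seq Sigma) (Rl : Type) (Rbot : Rl)
          (I : Rl -> nat -> nat -> Prop).
Let n := size w.

Definition atom_holds (a : atom Rl) (x y : nat) : Prop :=
  match a with
  | ALeft Sr => I Sr (wpred x) y /\ ~ is_min x
  | ADown Sr => I Sr x (wpred y) /\ ~ is_min y
  end.

Definition clause_holds (c : clause Sigma Rl) (x y : nat) : Prop :=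
  match c with
  | InMin s R => is_min x /\ is_min y /\ Qs w s y -> I R x y
  | InNotMin s R => is_min x /\ ~ is_min y /\ Qs w s y -> I R x y
  | Contra => is_max n x /\ is_max n y /\ I Rbot x y -> False
  | Comp a l R => (atom_holds a x y /\ forall b, List.In b l -> atom_holds b x y)
                  -> I R x y
  end.
End Sat.

Definition models (Sigma : eqType) (w : seq Sigma) (Phi : formula Sigma) : Prop :=
  exists I : frel Phi -> nat -> nat -> Prop,
    forall x y, 1 <= x <= size w -> 1 <= y <= size w ->
      forall c, List.In c (fclauses Phi) -> clause_holds w (fRbot Phi) I c x y.

Unset Implicit Arguments.
Record OIA (Sigma : Type) := MkOIA {
  st : finType;
  acc : pred st;
  lam : st;
  sharp : st;
  delta : st -> st -> st;        (* delta(left neighbour, own state) *)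
  delta_in : Sigma -> st -> st -> st;
       (* input transition of cell 1: (letter, left neighbour (= #), own state) *)
  quiescent : delta lam lam = lam }.
Arguments st {Sigma} _. Arguments acc {Sigma} _. Arguments lam {Sigma} _. Arguments sharp {Sigma} _. Arguments delta {Sigma} _. Arguments delta_in {Sigma} _. Arguments quiescent {Sigma} _.
Set Implicit Arguments.

Section Run.
Variables (Sigma : eqType) (A : OIA Sigma) (w : seq Sigma).
(* conf t c = <c,t> for cells c >= 1; cell 0 is permanently # *)
Fixpoint conf (t : nat) : nat -> st A :=
  match t with
  | 0 => fun _ => lam A
  | t'.+1 => fun c =>
      if c == 0 then sharp A
      else if c == 1 then
        match onth w t' with       (* letter w_t is fed at time t <= n *)
        | Some a => delta_in A a (sharp A) (conf t' 1)
        | None => delta A (sharp A) (conf t' 1)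
        end
      else delta A (conf t' c.-1) (conf t' c)
  end.
End Run.

Definition rt_accepts (Sigma : eqType) (A : OIA Sigma) (w : seq Sigma) : bool :=
  acc A (conf A w (2 * size w - 1) (size w)).

(* Main.v *)
Require Import Defs.
From mathcomp Require Import all_boot zify.

Section Constr.
Variables (Sigma : finType) (Phi : formula Sigma).
Local Notation R := (Defs.frel Phi).

Definition atom_ok (left down : option {set R}) (a : atom R) : bool :=
  match a with
  | ALeft Sr => if left is Some L then Sr \in L else false
  | ADown Sr => if down is Some D then Sr \in D else false
  end.

Definition fires (lt : option Sigma) (left down : option {set R}) (r : R)
  (c : clause Sigma R) : bool :=
  match c with
  | InMin s r' => [&& r' == r, left == None, lt == Some s & down == None]
  | InNotMin s r' => [&& r' == r, left == None, lt == Some s & down != None]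
  | Contra => false
  | Comp a l r' => [&& r' == r, atom_ok left down a & all (atom_ok left down) l]
  end.

Definition step lt left down : {set R} :=
  [set r | has (fires lt left down r) (fclauses Phi)].

Fixpoint colf (left : nat -> option {set R}) (lt : nat -> option Sigma) (y : nat)
  : {set R} :=
  match y with
  | 0 => step (lt 0) (left 0) None
  | y'.+1 => step (lt y) (left y) (Some (colf left lt y'))
  end.

Fixpoint G (w : seq Sigma) (x : nat) : nat -> {set R} :=
  match x with
  | 0 => colf (fun _ => None) (fun y => onth w y)
  | x'.+1 => colf (fun y => Some (G w x' y)) (fun _ => None)
  end.

Definition stT : finType := option (option {set R}).
Definition data (o : stT) : option {set R} :=
  if o is Some (Some D) then Some D else None.
Definition dlt (l o : stT) : stT :=
  match l with Some (Some L) => Some (Some (step None (Some L) (data o))) | _ => o end.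
Definition din (a : Sigma) (_ o : stT) : stT :=
  Some (Some (step (Some a) None (data o))).
Definition hasContra := has (fun c => if c is Contra then true else false) (fclauses Phi).
Definition accp (s : stT) : bool :=
  ~~ hasContra || (if s is Some (Some M) then fRbot Phi \notin M else true).

Definition theA : OIA Sigma := MkOIA Sigma stT accp None (Some None) dlt din erefl.

Lemma conf_lam w t c : t < c -> conf theA w t c = None.
Proof.
elim: t c => [|t IH] c //= H.
have -> : (c == 0) = false by case: c H.
have -> : (c == 1) = false by case: c H => [|[|c]].
rewrite IH; last by case: c H => [|c] //= /ltnW.
by rewrite IH // ltnW.
Qed.

Lemma conf_S1 w t : conf theA w t.+1 1 =
  match onth w t with Some a => din a (Some None) (conf theA w t 1)
  | None => conf theA w t 1 end.
Proof. by rewrite /=; case: (onth w t). Qed.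
Lemma conf_SS w t c : conf theA w t.+1 c.+2 = dlt (conf theA w t c.+1) (conf theA w t c.+2).
Proof. by []. Qed.
Lemma G00 w : G w 0 0 = step (onth w 0) None None. Proof. by []. Qed.
Lemma G0S w y : G w 0 y.+1 = step (onth w y.+1) None (Some (G w 0 y)). Proof. by []. Qed.
Lemma GS0 w x : G w x.+1 0 = step None (Some (G w x 0)) None. Proof. by []. Qed.
Lemma GSS w x y : G w x.+1 y.+1 = step None (Some (G w x y.+1)) (Some (G w x.+1 y)).
Proof. by []. Qed.

Lemma conf_G w k : forall x y, x + y = k -> y < size w ->
  conf theA w k.+1 x.+1 = Some (Some (G w x y)).
Proof.
elim: k => [|k IHk] x y.
  case: x y => [|x] [|y] //= _ Hn.
  by case: w Hn.
move=> Hxy Hy.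
case: x Hxy => [|x] Hxy.
  rewrite add0n in Hxy; subst y.
  rewrite conf_S1.
  case E: (onth w k.+1) => [a|]; last first.
    by move: (onthTE w k.+1); rewrite E Hy.
  by rewrite /din (IHk 0 k) // ?G0S ?E //; exact: ltnW.
rewrite conf_SS.
case: y Hxy Hy => [|y] Hxy Hy.
  move: Hxy; rewrite addn0 => -[Hk]; subst k.
  by rewrite (IHk x 0) ?addn0 // conf_lam // GS0.
rewrite (IHk x y.+1); last 2 first.
- lia.
- done.
rewrite (IHk x.+1 y) //; last exact: ltnW.
lia.
Qed.


Lemma has_In T (p : pred T) s : has p s -> exists c, List.In c s /\ p c.
Proof.
elim: s => [|a s IH] //= /orP[H|/IH [c [H1 H2]]]; first by exists a; auto.
by exists c; auto.
Qed.
Lemma In_has T (p : pred T) s c : List.In c s -> p c -> has p s.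
Proof.
elim: s => [|a s IH] //= [->->//|H Hp]; by rewrite IH ?orbT.
Qed.
Lemma all_In T (p : pred T) s b : all p s -> List.In b s -> p b.
Proof.
elim: s => [|a s IH] //= /andP[H1 H2] [<-//|]; exact: IH.
Qed.
Lemma In_all T (p : pred T) s : (forall b, List.In b s -> p b) -> all p s.
Proof.
elim: s => [|a s IH] //= H; rewrite H /=; last by left.
by apply: IH => b Hb; apply: H; right.
Qed.

Lemma wpredS k : wpred k.+2 = k.+1.
Proof. rewrite /wpred; lia. Qed.

Definition leftopt w x y := if x is x'.+1 then Some (G w x' y) else None.
Definition downopt w x y := if y is y'.+1 then Some (G w x y') else None.

Lemma Gstep w x y : G w x y =
  step (if x is 0 then onth w y else None) (leftopt w x y) (downopt w x y).
Proof. by case: x => [|x]; case: y. Qed.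

Definition IG w (r : R) (x y : nat) : Prop := r \in G w x.-1 y.-1.

Lemma sound (w : seq Sigma) x y c : 1 <= x <= size w -> 1 <= y <= size w ->
  List.In c (fclauses Phi) -> c <> @Contra Sigma R -> clause_holds w (fRbot Phi) (IG w) c x y.
Proof.
case: x => [|x] // /andP[_ Hx]; case: y => [|y] // /andP[_ Hy] Hc Hnc.
case: c Hc Hnc => [s r|s r||a l r] Hc Hnc //=.
- move=> [Hx1 [Hy1 Hq]]; rewrite /is_min in Hx1 Hy1.
  have ? : x = 0 by case: Hx1.
  have ? : y = 0 by case: Hy1.
  subst x y.
  change (r \in G w 0 0); rewrite G00 inE; apply: (@In_has _ (fires _ _ _ r) _ _ Hc) => /=.
  by move: Hq; rewrite /Qs /wletter /= => ->; rewrite !eqxx.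
- move=> [Hx1 [Hy1 Hq]]; rewrite /is_min in Hx1 Hy1.
  have ? : x = 0 by case: Hx1.
  subst x.
  case: y Hy Hy1 Hq => [|y] Hy Hy1 Hq //.
  change (r \in G w 0 y.+1); rewrite G0S inE; apply: (@In_has _ (fires _ _ _ r) _ _ Hc) => /=.
  change (onth w y.+1 = Some s) in Hq; rewrite /= in Hq; by rewrite Hq !eqxx.
- move=> [Ha Hl]; change (r \in G w x y); rewrite Gstep inE; apply: (@In_has _ (fires _ _ _ r) _ _ Hc) => /=.
  have conv : forall b, atom_holds (IG w) b x.+1 y.+1 ->
      atom_ok (leftopt w x y) (downopt w x y) b.
    case=> Sr /=.
      case: x {Hx Ha Hl} => [|x] [H1 H2]; first by case: H2.
      by move: H1; rewrite wpredS.
    case: y {Hy Ha Hl} => [|y] [H1 H2]; first by case: H2.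
    by move: H1; rewrite wpredS.
  rewrite eqxx conv //=; apply: In_all => b Hb; apply: conv; exact: Hl.
Qed.

Section Complete.
Variables (w : seq Sigma) (I : R -> nat -> nat -> Prop).
Hypothesis HI : forall x y, 1 <= x <= size w -> 1 <= y <= size w ->
      forall c, List.In c (fclauses Phi) -> clause_holds w (fRbot Phi) I c x y.

Lemma core x y r : x < size w -> y < size w ->
  (forall Sr, atom_ok (leftopt w x y) (downopt w x y) (ALeft Sr) -> I Sr (wpred x.+1) y.+1) ->
  (forall Sr, atom_ok (leftopt w x y) (downopt w x y) (ADown Sr) -> I Sr x.+1 (wpred y.+1)) ->
  r \in G w x y -> I r x.+1 y.+1.
Proof.
move=> Hx Hy HL HD; rewrite Gstep inE => /has_In [c [Hc Hf]].
have HIc := @HI x.+1 y.+1 Hx Hy _ Hc.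
case: c Hc Hf HIc => [s r'|s r'||a l r'] Hc Hf HIc //=.
- case/and4P: Hf => /eqP <- H1 H2 H3.
  case: x {HL HD} Hx H1 H2 H3 HIc => [|x] // Hx _ H2;
  case: y Hy H2 => [|y] // Hy H2 H3 HIc;
  by apply: HIc; split; [|split] => //; move/eqP: H2.
- case/and4P: Hf => /eqP <- H1 H2 H3.
  case: x {HL HD} Hx H1 H2 H3 HIc => [|x] // Hx _ H2;
  case: y Hy H2 => [|y] // Hy H2 H3 HIc;
  by apply: HIc; split; [|split] => //; move/eqP: H2.
- case/and3P: Hf => /eqP <- H1 H2.
  have conv : forall b, atom_ok (leftopt w x y) (downopt w x y) b -> atom_holds I b x.+1 y.+1.
    case=> Sr /= Hb.
      split; first exact: HL.
      by case: x {Hx HL HD HIc H1 H2} Hb.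
    split; first exact: HD.
    by case: y {Hy HL HD HIc H1 H2} Hb.
  apply: HIc; split; first exact: conv.
  move=> b Hb; apply: conv; exact: (@all_In _ (atom_ok (leftopt w x y) (downopt w x y)) l b H2 Hb).
Qed.

Lemma complete x y r : x < size w -> y < size w -> r \in G w x y -> I r x.+1 y.+1.
Proof.
elim: x y r => [|x IHx] y; elim: y => [|y IHy] r Hx Hy; apply: core => // Sr //=.
- by move=> H; rewrite wpredS; apply: IHy => //; exact: ltnW.
- by move=> H; rewrite wpredS; apply: IHx => //; exact: ltnW.
- by move=> H; rewrite wpredS; apply: IHx => //; exact: ltnW.
- by move=> H; rewrite wpredS; apply: IHy => //; exact: ltnW.
Qed.
End Complete.

End Constr.

Theorem lemma4 (Sigma : finType) (Phi : formula Sigma) :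
  exists A : OIA Sigma,
    forall w : seq Sigma, 0 < size w -> (rt_accepts A w <-> models w Phi).
Proof.
exists (theA _ Phi) => w Hn; rewrite /rt_accepts.
case E: (size w) Hn => [|m] // _.
have -> : 2 * m.+1 - 1 = (m + m).+1 by lia.
rewrite (@conf_G _ Phi w (m + m) m m erefl); last by rewrite E.
rewrite /accp /=; split.
- move=> H; exists (IG _ Phi w) => x y Hx Hy c Hc.
  case: c Hc => [s r|s r||a l r] Hc; try (by apply: sound).
  move=> /= [Hx1 [Hy1 Hr]]; move: Hx1 Hy1; rewrite /is_max E => Hx1 Hy1; subst x y.
  have Hh : hasContra _ Phi by apply: (@In_has _ (fun c => if c is Contra then true else false) _ _ Hc).
  by case/orP: H => /negP; apply.
- case=> I HI; rewrite /accp; case Hh: (hasContra _ Phi) => //=; apply/negP => Hr.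
  have [c [Hc Hcc]] := has_In _ _ _ Hh.
  case: c Hc Hcc => // Hc _.
  have := HI m.+1 m.+1 _ _ _ Hc; rewrite E => /(_ (leqnn _) (leqnn _)) /=; apply.
  split; first by [].
  split; first by [].
  by apply: (complete _ _ _ _ HI) => //; rewrite E.
Qed.
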